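(* Let $\mathbf{A}$ be a finite algebra and $B$ a subuniverse of $\mathbf{A}$. There exists a function $f:\mathbb{N}\to\mathbb{N}$ such that for every $N$, if $\mathbf{A}$ has an $f(N)$-ary $B$-essential subpower, then there exist $b_1,b_2\in B$ and $a_1,\dots,a_N\in A$ such that the subuniverse of $\mathbf{A}^N$ generated by the $N$ tuples $(a_1,b_2,b_2,\dots,b_2)$, $(b_1,a_2,b_2,\dots,b_2)$, $(b_1,b_1,a_3,b_2,\dots,b_2)$, $\dots$, $(b_1,\dots,b_1,a_N)$ (the $i$-th tuple has $b_1$ in positions $<i$, $a_i$ in position $i$, and $b_2$ in positions $>i$) is $B$-essential.
   Context: $B$-essential: a subuniverse $R$ of $\mathbf{A}^k$ is $B$-essential if $R\cap B^k=\emptyset$ and for every $i\in\{1,\dots,k\}$, $\pi_{\widehat i}(R)\cap B^{k-1}\neq\emptyset$, where $\pi_{\widehat i}(R)$ is the projection of $R$ onto all coordinates except the $i$-th. A subpower is a subuniverse of a finite power of $\mathbf{A}$. *)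

(* Defs.v *)
From mathcomp Require Import all_boot.
From Stdlib Require Import ClassicalEpsilon.
Set Implicit Arguments. Unset Strict Implicit. Unset Printing Implicit Defensive.

(* An algebra A is given by a finite carrier T, an arbitrary index type I of
   basic operations, an arity function ar and the operations op.
   Elements of A^k are finite functions {ffun 'I_k -> T}. *)

Definition op_pow (T : finType) (I : Type) (ar : I -> nat)
  (op : forall i, ('I_(ar i) -> T) -> T) (k : nat) (i : I)
  (x : 'I_(ar i) -> {ffun 'I_k -> T}) : {ffun 'I_k -> T} :=
  [ffun c => op i (fun j => x j c)].

Definition subuniverse (T : finType) (I : Type) (ar : I -> nat)
  (op : forall i, ('I_(ar i) -> T) -> T) (k : nat)
  (R : {set {ffun 'I_k -> T}}) : Prop :=
  forall (i : I) (x : 'I_(ar i) -> {ffun 'I_k -> T}),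
    (forall j, x j \in R) -> op_pow op x \in R.

Definition subuniverse1 (T : finType) (I : Type) (ar : I -> nat)
  (op : forall i, ('I_(ar i) -> T) -> T) (B : {set T}) : Prop :=
  forall (i : I) (x : 'I_(ar i) -> T), (forall j, x j \in B) -> op i x \in B.

Definition pbool (P : Prop) : bool :=
  if excluded_middle_informative P then true else false.

Definition Sg (T : finType) (I : Type) (ar : I -> nat)
  (op : forall i, ('I_(ar i) -> T) -> T) (k : nat)
  (X : {set {ffun 'I_k -> T}}) : {set {ffun 'I_k -> T}} :=
  [set x | pbool (forall S : {set {ffun 'I_k -> T}},
                    subuniverse op S -> X \subset S -> x \in S)].

Definition B_essential (T : finType) (B : {set T}) (k : nat)
  (R : {set {ffun 'I_k -> T}}) : Prop :=
  (~ exists2 r, r \in R & forall c, r c \in B) /\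
  (forall i : 'I_k, exists2 r, r \in R & forall c, c != i -> r c \in B).

Definition stair_tuple (T : finType) (N : nat) (b1 b2 : T) (a : 'I_N -> T)
  (i : 'I_N) : {ffun 'I_N -> T} :=
  [ffun c : 'I_N => if (c < i)%N then b1 else if c == i then a i else b2].

(* Main.v *)
Require Import Defs.
From mathcomp Require Import all_boot.
From mathcomp Require Import zify.
From Stdlib Require Import FunctionalExtensionality ClassicalEpsilon.
Set Implicit Arguments. Unset Strict Implicit. Unset Printing Implicit Defensive.

Fixpoint chain (X C : eqType) (col : X -> X -> C) (s : seq (X * C)) : bool :=
  if s is p :: s' then all (fun q => col p.1 q.1 == p.2) s' && chain col s'
  else true.

Lemma chain_filter (X C : eqType) (col : X -> X -> C) P s :
  chain col s -> chain col (filter P s).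
Proof.
elim: s => //= [[x c] s IH] /andP[Ha Hc].
case: (P (x, c)) => /=; last exact: IH Hc.
rewrite IH // andbT; apply/allP => q; rewrite mem_filter => /andP[_ Hq].
exact: (allP Ha q Hq).
Qed.

Lemma chain_nth (X C : eqType) (col : X -> X -> C) d s i j :
  chain col s -> (i < j)%N -> (j < size s)%N ->
  col (nth d s i).1 (nth d s j).1 = (nth d s i).2.
Proof.
elim: s i j => [|p s IH] i j //= /andP[Ha Hc] Hij Hj.
case: i Hij => [|i] Hij.
  case: j Hij Hj => // j _ Hj /=; apply/eqP; apply: (allP Ha); exact: mem_nth.
case: j Hij Hj => // j Hij Hj /=; exact: IH.
Qed.

Lemma pigeon (Y : Type) (C : finType) (F : Y -> C) (c0 : C) h (s : seq Y) :
  (0 < h)%N -> (#|C| * h <= size s)%N ->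
  exists c, (h <= count (fun y => F y == c) s)%N.
Proof.
move=> h0 hs.
have Hsum : (\sum_(c : C) count (fun y => F y == c) s)%N = size s.
  elim: s {hs} => [|y s IH] /=; first by rewrite big1.
  rewrite big_split /= IH (bigD1 (F y)) //= eqxx big1 ?addn0 ?add1n //.
  by move=> c Hc; rewrite eq_sym (negbTE Hc).
have [c hc|H] := pickP (fun c => h <= count (fun y => F y == c) s)%N.
  by exists c.
have HC : (0 < #|C|)%N by apply/card_gt0P; exists c0.
have : (size s <= #|C| * h.-1)%N.
  rewrite -Hsum -sum_nat_const; apply: leq_sum => c _.
  by have := H c; rewrite /= => /negbT; rewrite -ltnNge => Hc; rewrite -ltnS prednK.
nia.
Qed.

Lemma greedy (X C : finType) (col : X -> X -> C) (c0 : C) m (A : seq X) :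
  uniq A -> (#|C|.+1 ^ m <= size A)%N ->
  exists s, [/\ chain col s, uniq (map fst s), size s = m &
               all (fun p => p.1 \in A) s].
Proof.
elim: m A => [|m IH] A uA hA; first by exists [::].
case: A uA hA => [|x A'] /=; first by rewrite leqn0 expn_eq0.
move=> /andP[xA' uA'] hA.
have hA' : (#|C| * #|C|.+1 ^ m <= size A')%N.
  have P0 := expn_gt0 #|C|.+1 m.
  move: hA P0; rewrite expnS mulSn /=; set P := (_ ^ m)%N; nia.
have [c hc] := @pigeon _ _ (col x) c0 (#|C|.+1 ^ m) A' (expn_gt0 _ _) hA'.
have hf : (#|C|.+1 ^ m <= size (filter (fun y => col x y == c) A'))%N.
  by rewrite size_filter.
have [s [Hc Hu Hs Ha]] := IH (filter (fun y => col x y == c) A')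
  (filter_uniq _ uA') hf.
exists ((x, c) :: s); split => /=.
- rewrite Hc andbT; apply/allP => q /(allP Ha); rewrite mem_filter.
  by case/andP.
- rewrite Hu andbT; apply/negP => /mapP [q /(allP Ha)]; rewrite mem_filter.
  by case/andP => _ qA Ex; rewrite Ex qA in xA'.
- by rewrite Hs.
- rewrite inE eqxx /=; apply/allP => q /(allP Ha); rewrite mem_filter inE.
  by case/andP => _ ->; rewrite orbT.
Qed.

Lemma key (T : finType) (I : Type) (ar : I -> nat)
  (op : forall i, ('I_(ar i) -> T) -> T) (B : {set T})
  (hB : subuniverse1 op B) k (R : {set {ffun 'I_k -> T}})
  (hR : subuniverse op R) (hE : ~ exists2 r, r \in R & forall c, r c \in B)
  N (rr : 'I_k -> {ffun 'I_k -> T}) (hrR : forall i, rr i \in R)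
  (hrB : forall i j, j != i -> rr i j \in B)
  (sg : 'I_N -> 'I_k) b1 b2 (hb1 : b1 \in B) (hb2 : b2 \in B)
  (hlt : forall s t : 'I_N, (s < t)%N ->
     rr (sg s) (sg t) = b2 /\ rr (sg t) (sg s) = b1) :
  B_essential B (Sg op [set stair_tuple b1 b2 (fun t => rr (sg t) (sg t)) i
                        | i : 'I_N]).
Proof.
set X := [set _ | _ : 'I_N].
pose S := [set x : {ffun 'I_N -> T} | [exists r in R,
   [forall t, r (sg t) == x t] &&
   [forall c, [forall t, sg t != c] ==> (r c \in B)]]].
have XS : X \subset S.
  apply/subsetP => _ /imsetP[t _ ->]; rewrite inE; apply/existsP.
  exists (rr (sg t)); rewrite hrR /=; apply/andP; split.
    apply/forallP => s; rewrite ffunE; apply/eqP.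
    case: (ltnP s t) => Hst; first by case: (hlt s t Hst).
    case: eqVneq => [-> //|Hne].
    have Hts : (t < s)%N by rewrite ltn_neqAle Hst andbT; apply/eqP => /val_inj E; rewrite E eqxx in Hne.
    by case: (hlt t s Hts).
  apply/forallP => c; apply/implyP => /forallP H; apply: hrB.
  by rewrite eq_sym; exact: H t.
have SS : subuniverse op S.
  move=> i x Hx.
  have E j : exists r, (r \in R) && ([forall t, r (sg t) == x j t] &&
      [forall c, [forall t, sg t != c] ==> (r c \in B)]).
    by have := Hx j; rewrite inE => /existsP.
  pose r j := xchoose (E j).
  have Hr j := xchooseP (E j).
  rewrite inE; apply/existsP; exists (op_pow op r); apply/and3P; split.
  - by apply: hR => j; case/andP: (Hr j).
  - apply/forallP => t; rewrite !ffunE; apply/eqP; congr (op i _).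
    apply: functional_extensionality => j.
    by case/and3P: (Hr j) => _ /forallP /(_ t) /eqP.
  - apply/forallP => c; apply/implyP => Hc; rewrite ffunE; apply: hB => j.
    by case/and3P: (Hr j) => _ _ /forallP /(_ c) /implyP; apply.
have SgS : Sg op X \subset S.
  apply/subsetP => x; rewrite inE /pbool.
  by case: excluded_middle_informative => // H _; exact: H S SS XS.
have XSg : X \subset Sg op X.
  apply/subsetP => x Hx; rewrite inE /pbool.
  case: excluded_middle_informative => // H; exfalso; apply: H => S' _ /subsetP.
  by apply.
split.
- case=> x /(subsetP SgS); rewrite inE => /existsP [r /and3P [rR /forallP H1 /forallP H2]] HxB.
  apply: hE; exists r => // c.
  case: (pickP (fun t => sg t == c)) => [t /eqP <- | H].
    by rewrite (eqP (H1 t)); exact: HxB.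
  have : [forall t, sg t != c] by apply/forallP => t; rewrite H.
  by move/(implyP (H2 c)).
- move=> i; exists (stair_tuple b1 b2 (fun t => rr (sg t) (sg t)) i).
    by apply: (subsetP XSg); apply: imset_f.
  move=> c Hc; rewrite ffunE; case: ifP => _ //; by rewrite (negbTE Hc).
Qed.

Theorem lemma3p2 (T : finType) (I : Type) (ar : I -> nat)
  (op : forall i, ('I_(ar i) -> T) -> T) (B : {set T})
  (hB : subuniverse1 op B) :
  exists f : nat -> nat, forall N : nat,
    (exists R : {set {ffun 'I_(f N) -> T}}, subuniverse op R /\ B_essential B R) ->
    exists b1, exists b2, exists a : 'I_N -> T,
      [/\ b1 \in B, b2 \in B &
          B_essential B (Sg op [set stair_tuple b1 b2 a i | i : 'I_N])].
Proof.
pose K := #|{: T * T}|.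
exists (fun N => (K.+1 ^ (K * N)) + 2)%N => N [R [hR [hE hE2]]].
move: R hR hE hE2; set k := (_ + 2)%N => R hR hE hE2.
have hk : (1 < k)%N by rewrite /k addn2.
pose i0 : 'I_k := Ordinal (ltnW hk).
pose i1 : 'I_k := Ordinal hk.
have E i : exists r, (r \in R) && [forall c, (c != i) ==> (r c \in B)].
  case: (hE2 i) => r rR rB; exists r; rewrite rR; apply/forallP => c.
  by apply/implyP; exact: rB.
pose rr i := xchoose (E i).
have hrR i : rr i \in R by case/andP: (xchooseP (E i)).
have hrB i j : j != i -> rr i j \in B.
  by case/andP: (xchooseP (E i)) => _ /forallP /(_ j) /implyP.
have hb : rr i0 i1 \in B by apply: hrB.
case: (leqP N 1) => HN.
  pose sg := fun _ : 'I_N => i0.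
  exists (rr i0 i1), (rr i0 i1), (fun t => rr (sg t) (sg t)); split => //.
  apply: (key hB hR hE hrR hrB) => // s t Hst.
  have := ltn_ord t; lia.
have hsz : (#|{: T * T}|.+1 ^ (K * N) <= size (enum 'I_k))%N.
  by rewrite size_enum_ord /k leq_addr.
have [s [Hc Hu Hs Ha]] := @greedy _ _ (fun i j => (rr i j, rr j i))
   (rr i0 i0, rr i0 i0) (K * N) (enum 'I_k) (enum_uniq _) hsz.
have hs' : (#|{: T * T}| * N <= size s)%N by rewrite Hs.
have [c hc] := @pigeon _ _ snd (rr i0 i0, rr i0 i0) N s (ltnW HN) hs'.
set L := filter (fun p => p.2 == c) s.
have HLc : chain (fun i j => (rr i j, rr j i)) L by apply: chain_filter.
have HLu : uniq (map fst L).
  exact: subseq_uniq (map_subseq fst (filter_subseq _ s)) Hu.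
have HLs : (N <= size L)%N by rewrite size_filter.
pose d := (i0, c).
pose sg := fun t : 'I_N => (nth d L t).1.
have HL2 (t : 'I_N) : (nth d L t).2 = c.
  have := mem_nth d (leq_trans (ltn_ord t) HLs); rewrite mem_filter.
  by case/andP => /eqP.
have hcol (s' t : 'I_N) : (s' < t)%N -> (rr (sg s') (sg t), rr (sg t) (sg s')) = c.
  move=> H; have := chain_nth d HLc H (leq_trans (ltn_ord t) HLs).
  by rewrite HL2.
have sg_inj : injective sg.
  move=> s' t; rewrite /sg -!(nth_map d i0 fst) ?(leq_trans (ltn_ord _) HLs) //.
  move=> /eqP; rewrite nth_uniq ?size_map ?(leq_trans (ltn_ord _) HLs) //.
  by move/eqP/val_inj.
pose s0 : 'I_N := Ordinal (ltnW HN).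
pose t1 : 'I_N := Ordinal HN.
have H01 : (s0 < t1)%N by [].
have Hne : sg t1 != sg s0.
  by apply/negP => /eqP /sg_inj /(congr1 val).
exists c.2, c.1, (fun t => rr (sg t) (sg t)); split.
- rewrite -(hcol _ _ H01) /=; apply: hrB; by rewrite eq_sym.
- rewrite -(hcol _ _ H01) /=; exact: hrB.
- apply: (@key T I ar op B hB k R hR hE N rr hrR hrB sg c.2 c.1).
  + rewrite -(hcol _ _ H01) /=; apply: hrB; by rewrite eq_sym.
  + rewrite -(hcol _ _ H01) /=; exact: hrB.
  + by move=> s' t H; rewrite -(hcol _ _ H).
Qed.
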